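(* Let $W\subset\mathbb{R}^{n+1}$ be a self-dual Wulff shape. Then $W$ is centrally symmetric (i.e. $x\in W$ implies $-x\in W$) if and only if $W$ is the unit disc $D^{n+1}=\{x\in\mathbb{R}^{n+1}:\|x\|\le1\}$.
   Context: For continuous $\gamma:S^n\to\mathbb{R}_+$, the Wulff shape is $\mathcal{W}_\gamma=\bigcap_{\theta\in S^n}\{x\in\mathbb{R}^{n+1}: x\cdot\theta\le\gamma(\theta)\}$ (every convex body with the origin in its interior is of this form). For each $\theta\in S^n$ the ray $\{r\theta:r>0\}$ meets $\partial\mathcal{W}_\gamma$ in exactly one point $w(\theta)\theta$. The dual Wulff shape is $\mathcal{DW}_\gamma=\mathcal{W}_{\overline\gamma}$ with $\overline\gamma(\theta)=1/w(-\theta)$, and $\mathcal{W}_\gamma$ is self-dual if $\mathcal{W}_\gamma=\mathcal{DW}_\gamma$. *)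

(* Defs.v *)
From Stdlib Require Import Reals.
Open Scope R_scope.

(* Points of R^{n+1} are represented as functions nat -> R; only the
   coordinates 0..n are ever used (all notions below depend only on them). *)
Definition pt := nat -> R.

Definition dot (n : nat) (x y : pt) : R := sum_f_R0 (fun i => x i * y i) n.
Definition dist (n : nat) (x y : pt) : R :=
  sqrt (dot n (fun i => x i - y i) (fun i => x i - y i)).
Definition scal (r : R) (x : pt) : pt := fun i => r * x i.
Definition opp (x : pt) : pt := fun i => - x i.

Definition sphere (n : nat) (th : pt) : Prop := dot n th th = 1.

Definition positive_on_sphere (n : nat) (g : pt -> R) : Prop :=
  forall th, sphere n th -> 0 < g th.
Definition continuous_on_sphere (n : nat) (g : pt -> R) : Prop :=
  forall th, sphere n th -> forall eps, 0 < eps -> exists delta, 0 < delta /\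
    forall th', sphere n th' -> dist n th th' < delta -> Rabs (g th' - g th) < eps.

Definition Wulff (n : nat) (g : pt -> R) (x : pt) : Prop :=
  forall th, sphere n th -> dot n x th <= g th.

Definition boundary (n : nat) (A : pt -> Prop) (x : pt) : Prop :=
  forall eps, 0 < eps ->
    (exists y, dist n x y < eps /\ A y) /\ (exists y, dist n x y < eps /\ ~ A y).

(* w(theta): the (unique) r > 0 with r theta on the boundary of W_gamma *)
Definition radial (n : nat) (g : pt -> R) (th : pt) (r : R) : Prop :=
  0 < r /\ boundary n (Wulff n g) (scal r th).

(* dual Wulff shape: W_{gbar} with gbar(theta) = 1 / w(-theta) *)
Definition dualWulff (n : nat) (g : pt -> R) (x : pt) : Prop :=
  forall th, sphere n th -> forall r, radial n g (opp th) r -> dot n x th <= 1 / r.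

Definition self_dual (n : nat) (g : pt -> R) : Prop :=
  forall x, Wulff n g x <-> dualWulff n g x.

Definition centrally_symmetric (A : pt -> Prop) : Prop :=
  forall x, A x -> A (opp x).

Definition unit_disc (n : nat) (x : pt) : Prop := dot n x x <= 1.

(* Main.v *)
Require Import Defs.
From Stdlib Require Import Reals Lra Psatz.
Open Scope R_scope.

Lemma dot_scal_l n t x y : dot n (scal t x) y = t * dot n x y.
Proof. unfold dot, scal; induction n; simpl; [ring| rewrite IHn; ring]. Qed.
Lemma dot_scal_r n t x y : dot n x (scal t y) = t * dot n x y.
Proof. unfold dot, scal; induction n; simpl; [ring| rewrite IHn; ring]. Qed.
Lemma dot_opp_l n x y : dot n (opp x) y = - dot n x y.
Proof. unfold dot, opp; induction n; simpl; [ring| rewrite IHn; ring]. Qed.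
Lemma dot_opp_opp n x : dot n (opp x) (opp x) = dot n x x.
Proof. unfold dot, opp; induction n; simpl; [ring| rewrite IHn; ring]. Qed.
Lemma dot_sub_l n x y z : dot n (fun i => x i - y i) z = dot n x z - dot n y z.
Proof. unfold dot; induction n; simpl; [ring| rewrite IHn; ring]. Qed.
Lemma dot_quad n x y a :
  dot n (fun i => x i - a * y i) (fun i => x i - a * y i)
  = dot n x x - 2 * a * dot n x y + a * a * dot n y y.
Proof. unfold dot; induction n; simpl; [ring| rewrite IHn; ring]. Qed.
Lemma dot_nonneg n x : 0 <= dot n x x.
Proof. unfold dot; induction n; simpl; nra. Qed.
Lemma quad_ineq n x y a :
  0 <= dot n x x - 2 * a * dot n x y + a * a * dot n y y.
Proof. rewrite <- dot_quad. apply dot_nonneg. Qed.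
Lemma dot_scal2 n a b u :
  dot n (fun i => a * u i - b * u i) (fun i => a * u i - b * u i)
  = (a - b) * (a - b) * dot n u u.
Proof. unfold dot; induction n; simpl; [ring| rewrite IHn; ring]. Qed.

Lemma dist_scal n a b u : dot n u u = 1 -> Defs.dist n (scal a u) (scal b u) = Rabs (a - b).
Proof.
  intro Hu. unfold Defs.dist, scal. rewrite dot_scal2, Hu, Rmult_1_r.
  change ((a-b)*(a-b)) with (Rsqr (a-b)). apply sqrt_Rsqr_abs.
Qed.

Lemma radial_exists n g u s : dot n u u = 1 -> 0 < s -> Wulff n g (scal s u) ->
  exists r, s <= r /\ radial n g u r.
Proof.
  intros Hu Hs Ws.
  set (E := fun t => 0 <= t /\ Wulff n g (scal t u)).
  assert (Hb : bound E).
  { exists (g u). intros t [_ Ht]. specialize (Ht u Hu).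
    rewrite dot_scal_l, Hu in Ht. lra. }
  destruct (completeness E Hb (ex_intro _ s (conj (Rlt_le _ _ Hs) Ws))) as [r [Hub Hl]].
  assert (Hsr : s <= r) by (apply Hub; split; [lra|exact Ws]).
  assert (Wr : Wulff n g (scal r u)).
  { intros th Hth. rewrite dot_scal_l. destruct (Rle_or_lt (dot n u th) 0) as [Hd|Hd].
    - specialize (Ws th Hth). rewrite dot_scal_l in Ws. nra.
    - assert (r <= g th / dot n u th).
      { apply Hl. intros t [Ht0 Ht]. specialize (Ht th Hth). rewrite dot_scal_l in Ht.
        apply Rmult_le_reg_r with (dot n u th); auto.
        unfold Rdiv; rewrite Rmult_assoc, Rinv_l; lra. }
      replace (g th) with (g th / dot n u th * dot n u th) by (field; lra).
      apply Rmult_le_compat_r; lra. }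
  exists r; split; [lra|split;[lra|]]. intros eps Heps. split.
  - exists (scal r u). split; [rewrite dist_scal; auto; rewrite Rminus_diag, Rabs_R0; lra | exact Wr].
  - exists (scal (r + eps/2) u). split.
    + rewrite dist_scal; auto. replace (r - (r + eps/2)) with (-(eps/2)) by ring.
      rewrite Rabs_Ropp, Rabs_pos_eq; lra.
    + intro H. assert (r + eps/2 <= r) by (apply Hub; split; [lra|exact H]). lra.
Qed.

Lemma W_in_disc n g (hsd : self_dual n g) (hcs : centrally_symmetric (Wulff n g)) x :
  Wulff n g x -> dot n x x <= 1.
Proof.
  intro Wx. pose proof (dot_nonneg n x) as H0.
  destruct (Req_dec (dot n x x) 0) as [Hz|Hz]; [lra|].
  set (s := sqrt (dot n x x)).
  assert (Hs : 0 < s) by (apply sqrt_lt_R0; lra).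
  assert (Hss : s * s = dot n x x) by (apply sqrt_sqrt; lra).
  set (th := scal (1/s) x).
  assert (Hth : sphere n th).
  { unfold sphere, th. rewrite dot_scal_l, dot_scal_r, <- Hss. field. lra. }
  assert (Hu : dot n (opp th) (opp th) = 1) by (rewrite dot_opp_opp; exact Hth).
  assert (Wsu : Wulff n g (scal s (opp th))).
  { intros ph Hph. rewrite dot_scal_l, dot_opp_l. unfold th. rewrite dot_scal_l.
    specialize (hcs x Wx ph Hph). rewrite dot_opp_l in hcs.
    replace (s * - (1 / s * dot n x ph)) with (- dot n x ph) by (field; lra). exact hcs. }
  destruct (radial_exists n g (opp th) s Hu Hs Wsu) as [r [Hsr Hr]].
  pose proof (proj1 (hsd x) Wx th Hth r Hr) as Hd.
  unfold th in Hd. rewrite dot_scal_r, <- Hss in Hd.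
  replace (1 / s * (s * s)) with s in Hd by (field; lra).
  assert (s <= 1 / s).
  { apply Rle_trans with (1/r); auto. unfold Rdiv. apply Rmult_le_compat_l; [lra|].
    apply Rinv_le_contravar; lra. }
  assert (s * s <= 1).
  { replace 1 with (1/s * s) by (field; lra). apply Rmult_le_compat_r; lra. }
  lra.
Qed.

Theorem proposition4p1 (n : nat) (g : pt -> R)
  (hpos : positive_on_sphere n g) (hcont : continuous_on_sphere n g)
  (hsd : self_dual n g) :
  centrally_symmetric (Wulff n g) <-> (forall x, Wulff n g x <-> unit_disc n x).
Proof.
  split.
  - intros hcs x. split.
    + apply (W_in_disc n g hsd hcs).
    + intro Hx. unfold unit_disc in Hx. apply (proj2 (hsd x)).
      intros th Hth r [Hr Hb].
      assert (Hv : dot n (opp th) (opp th) = 1) by (rewrite dot_opp_opp; exact Hth).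
      assert (r <= 1).
      { destruct (Rle_or_lt r 1) as [|Hr1]; [assumption|exfalso].
        set (eps := r - 1).
        destruct (proj1 (Hb eps ltac:(unfold eps; lra))) as [y [Hdy Wy]].
        pose proof (W_in_disc n g hsd hcs y Wy) as Hyy.
        set (d := fun i => scal r (opp th) i - y i).
        assert (Hdd : dot n d d < eps * eps).
        { unfold Defs.dist in Hdy. fold d in Hdy. pose proof (dot_nonneg n d).
          pose proof (sqrt_sqrt (dot n d d) H). pose proof (sqrt_pos (dot n d d)). nra. }
        assert (Hdv : dot n d (opp th) = r - dot n y (opp th)).
        { unfold d. rewrite dot_sub_l, dot_scal_l, Hv. ring. }
        pose proof (quad_ineq n y (opp th) 1) as Q1.
        pose proof (quad_ineq n d (opp th) eps) as Q2.
        rewrite Hv in Q1, Q2. unfold eps in *. nra. }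
      pose proof (quad_ineq n x th 1) as Q. unfold sphere in Hth. rewrite Hth in Q.
      assert (1 <= 1 / r).
      { unfold Rdiv. rewrite Rmult_1_l. replace 1 with (/1) at 1 by field.
        apply Rinv_le_contravar; lra. }
      lra.
  - intros Heq x Wx. apply Heq. apply Heq in Wx. unfold unit_disc in *.
    rewrite dot_opp_opp. exact Wx.
Qed.
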